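(* Let $f\colon\underline I=I_1\times\cdots\times I_n\to\mathbb R$ be a convex and separately increasing function ($I_i$ intervals), and let $H$ be a finite-dimensional Hilbert space. Let $\underline x=(x_1,\dots,x_n)$ and $\underline y=(y_1,\dots,y_n)$ be abelian $n$-tuples of self-adjoint operators on $H$ with $\sigma(x_i),\sigma(y_i)\subseteq I_i$ for all $i$. If $x_i\le y_i$ for $i=1,\dots,n$, then $f(\underline x)\prec_w f(\underline y)$.
   Context: Separately increasing means increasing in each variable when the others are held fixed. An $n$-tuple is abelian if its entries commute; $f$ of an abelian tuple of self-adjoint operators is defined by joint functional calculus. For a self-adjoint operator $x$ on an $m$-dimensional Hilbert space, $x_{[1]}\ge\cdots\ge x_{[m]}$ are its eigenvalues counted with multiplicity in decreasing order, and $x\prec_w y$ means $\sum_{i=1}^k x_{[i]}\le\sum_{i=1}^k y_{[i]}$ for $k=1,\dots,m$. *)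

(* Defs.v *)
(* real numbers R : realType, complex numbers R[i]
   (mathcomp-real-closed), matrices over R[i] model operators on the
   m-dimensional Hilbert space C^m. *)
From mathcomp Require Import all_boot all_order all_algebra.
From mathcomp Require Import reals.
From mathcomp.real_closed Require Import complex.

Set Implicit Arguments.
Unset Strict Implicit.
Unset Printing Implicit Defensive.

Import Order.TTheory GRing.Theory Num.Theory.
Local Open Scope ring_scope.
Local Open Scope complex_scope.
Local Open Scope sesquilinear_scope.

Definition selfadjoint (R : realType) (m : nat) (x : 'M[R[i]]_m) : Prop :=
  x ^t* = x.

Definition abelian_tuple (R : realType) (n m : nat) (xs : 'I_n -> 'M[R[i]]_m) : Prop :=
  forall i j, xs i *m xs j = xs j *m xs i.

Definition spec_in (R : realType) (m : nat) (x : 'M[R[i]]_m) (I : interval R) : Prop :=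
  forall a : R[i], eigenvalue x a -> exists2 r : R, a = r%:C & r \in I.

Definition loewner_le (R : realType) (m : nat) (x y : 'M[R[i]]_m) : Prop :=
  forall v : 'rV[R[i]]_m, 0 <= (v *m (y - x) *m v ^t*) 0 0.

Definition in_box (R : realType) (n : nat) (I : 'I_n -> interval R) (u : 'rV[R]_n) : Prop :=
  forall i, u 0 i \in I i.

Definition convex_on_box (R : realType) (n : nat) (I : 'I_n -> interval R)
  (f : 'rV[R]_n -> R) : Prop :=
  forall (u v : 'rV[R]_n) (t : R), in_box I u -> in_box I v -> 0 <= t <= 1 ->
    f (t *: u + (1 - t) *: v) <= t * f u + (1 - t) * f v.

Definition sep_increasing (R : realType) (n : nat) (I : 'I_n -> interval R)
  (f : 'rV[R]_n -> R) : Prop :=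
  forall (u : 'rV[R]_n) (i : 'I_n) (s t : R), in_box I u ->
    s \in I i -> t \in I i -> s <= t ->
    f (\row_j (if j == i then s else u 0 j)) <= f (\row_j (if j == i then t else u 0 j)).

(* joint functional calculus: z = f(xs) for the abelian tuple xs of self-adjoint
   operators, i.e. xs i = U^* diag(d_i) U for a common unitary U and real
   diagonals d_i, and z = U^* diag(k |-> f(d_1 k, ..., d_n k)) U. *)
Definition joint_fcalc (R : realType) (n m : nat) (f : 'rV[R]_n -> R)
  (xs : 'I_n -> 'M[R[i]]_m) (z : 'M[R[i]]_m) : Prop :=
  exists (U : 'M[R[i]]_m) (d : 'I_n -> 'rV[R]_m),
    U \is unitarymx /\
    (forall i, xs i = U ^t* *m diag_mx (map_mx (@real_complex R) (d i)) *m U) /\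
    z = U ^t* *m diag_mx (\row_k (f (\row_i d i 0 k))%:C) *m U.

Definition eigs_desc (R : realType) (m : nat) (x : 'M[R[i]]_m) (s : seq R) : Prop :=
  size s = m /\ sorted (fun a b : R => b <= a) s /\
  char_poly x = \prod_(a <- s) ('X - (a%:C)%:P).

Definition weak_major (R : realType) (m : nat) (x y : 'M[R[i]]_m) : Prop :=
  forall s t : seq R, eigs_desc x s -> eigs_desc y t ->
    forall k : nat, (1 <= k <= m)%N ->
      \sum_(i < k) s`_i <= \sum_(i < k) t`_i.

(* Main.v *)
Require Import Defs.
From mathcomp Require Import all_boot all_order all_algebra.
From mathcomp Require Import reals.
From mathcomp.real_closed Require Import complex.
From mathcomp Require Import fingroup perm ring lra.
Import Order.TTheory GRing.Theory Num.Theory.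
Local Open Scope ring_scope.

Section Real.
Variable R : realType.

Lemma itv_between {I : interval R} {a b z : R} : a \in I -> b \in I -> a <= z <= b -> z \in I.
Proof.
case: I => bl br; rewrite !itv_boundlr => /andP[la _] /andP[_ rb] /andP[az zb].
apply/andP; split.
  apply: (le_trans la); by rewrite leBSide /= az.
apply: le_trans rb; by rewrite leBSide /= zb.
Qed.

Lemma itv_convex {I : interval R} {a b : R} (t : R) : a \in I -> b \in I -> 0 <= t <= 1 ->
  t * a + (1 - t) * b \in I.
Proof.
move=> aI bI /andP[t0 t1].
have [ab|ba] := leP a b.
  apply: (itv_between aI bI); apply/andP; split; nra.
apply: (itv_between bI aI); apply/andP; split; nra.
Qed.


Lemma box_convex {n} {I : 'I_n -> interval R} {u v : 'rV[R]_n} (t : R) :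
  in_box I u -> in_box I v -> 0 <= t <= 1 -> in_box I (t *: u + (1 - t) *: v).
Proof.
move=> hu hv ht i; rewrite !mxE; exact: itv_convex.
Qed.

Lemma jensen {n} {T : eqType} (I : 'I_n -> interval R) (f : 'rV[R]_n -> R) :
  convex_on_box I f ->
  forall (r : seq T) (p : T -> R) (u : T -> 'rV[R]_n),
  (forall l, 0 <= p l) -> (forall l, in_box I (u l)) -> \sum_(l <- r) p l = 1 ->
  in_box I (\sum_(l <- r) p l *: u l) /\
  f (\sum_(l <- r) p l *: u l) <= \sum_(l <- r) p l * f (u l).
Proof.
move=> cvx r; elim: r => [|a r IH] p u p0 ub.
  by rewrite big_nil => /eqP; rewrite eq_sym oner_eq0.
rewrite !big_cons => hs.
set S := \sum_(l <- r) p l.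
have S0 : 0 <= S by apply: sumr_ge0 => l _.
have [Sz|Snz] := eqVneq S 0.
  have hz : forall l, l \in r -> p l = 0.
    move: Sz; rewrite /S => /eqP; rewrite psumr_eq0 ?(fun l _ => p0 l) // => /allP H l lr.
    by apply/eqP; have := H l lr.
  have -> : \sum_(l <- r) p l *: u l = 0.
    by rewrite big_seq big1 // => l lr; rewrite hz // scale0r.
  have -> : \sum_(l <- r) p l * f (u l) = 0.
    by rewrite big_seq big1 // => l lr; rewrite hz // mul0r.
  have pa1 : p a = 1 by move: hs; rewrite -/S Sz addr0.
  by rewrite pa1 scale1r mul1r !addr0; split => //.
have Spos : 0 < S by rewrite lt_def Snz S0.
pose q l := p l / S.
have q0 : forall l, 0 <= q l by move=> l; rewrite /q divr_ge0.
have qs : \sum_(l <- r) q l = 1 by rewrite /q -mulr_suml mulfV.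
have [zb fz] := IH q u q0 ub qs.
have eqz : \sum_(l <- r) p l *: u l = S *: \sum_(l <- r) q l *: u l.
  rewrite scaler_sumr; apply: eq_bigr => l _; rewrite scalerA /q.
  by congr (_ *: _); field.
have eqf : \sum_(l <- r) p l * f (u l) = S * \sum_(l <- r) q l * f (u l).
  rewrite mulr_sumr; apply: eq_bigr => l _; rewrite /q.
  by field.
have hS : S = 1 - p a by rewrite -hs addrAC subrr add0r.
have ht : 0 <= p a <= 1 by rewrite p0 /= -subr_ge0 -hS.
rewrite eqz eqf hS; split; first exact: box_convex.
apply: le_trans (cvx _ _ _ (ub a) zb ht) _.
rewrite lerD2l ler_wpM2l //; by rewrite -hS.
Qed.


Lemma sep_mono {n} (I : 'I_n -> interval R) (f : 'rV[R]_n -> R) :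
  sep_increasing I f -> forall u v : 'rV[R]_n, in_box I u -> in_box I v ->
  (forall i, u 0 i <= v 0 i) -> f u <= f v.
Proof.
move=> inc u v ub vb uv.
pose w k := \row_(j < n) (if (j < k)%N then v 0 j else u 0 j).
have wb : forall k, in_box I (w k).
  by move=> k j; rewrite mxE; case: ifP.
have w0 : w 0%N = u by apply/rowP => j; rewrite mxE.
have wn : w n = v by apply/rowP => j; rewrite mxE ltn_ord.
suff H : forall k, (k <= n)%N -> f u <= f (w k) by rewrite -wn; exact: H.
elim => [|k IH] hk; first by rewrite w0.
apply: le_trans (IH (ltnW hk)) _.
have := inc (w k) (Ordinal hk) (u 0 (Ordinal hk)) (v 0 (Ordinal hk)) (wb k) (ub _) (vb _) (uv _).
congr (f _ <= f _); apply/rowP => j; rewrite !mxE.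
  case: eqP => [->|]; first by rewrite /= ltnn.
  done.
case: eqP => [->|/eqP]; first by rewrite /= ltnSn.
move=> H; have H2 : (val j == k) = false by apply/negbTE; rewrite -val_eqE in H.
by rewrite [in RHS]ltnS [in RHS]leq_eqVlt H2.
Qed.


Lemma sum_pred_le {m} (F : 'I_m -> R) (P : pred 'I_m) :
  (forall i, 0 <= F i) -> \sum_(i | P i) F i <= \sum_i F i.
Proof.
move=> F0; rewrite [X in _ <= X](bigID P) /= lerDl; exact: sumr_ge0.
Qed.

Lemma topk_pivot {m} (t : seq R) (k : nat) :
  size t = m -> sorted (fun a b : R => b <= a) t -> (1 <= k <= m)%N ->
  \sum_(i < k) t`_i = k%:R * t`_k.-1 + \sum_(x <- t) Num.max (x - t`_k.-1) 0.
Proof.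
move=> st so /andP[k1 km].
set th := t`_k.-1.
have tr : transitive (fun a b : R => b <= a) by move=> a b c ba cb; exact: le_trans cb ba.
have rf : reflexive (fun a b : R => b <= a) by move=> a; exact: lexx.
have hnth := sorted_leq_nth tr rf 0 so.
rewrite (big_nth 0) big_mkord st.
rewrite [X in _ = _ + X](bigID (fun i : 'I_m => (i < k)%N)) /=.
rewrite [X in _ = _ + (_ + X)]big1; last first.
  move=> i /negbTE ik; apply/max_idPr; rewrite subr_le0.
  have k1m : (k.-1 < m)%N by rewrite (leq_trans _ km) // prednK.
  have k1i : (k.-1 <= i)%N.
    by apply: leq_trans (leq_pred k) _; rewrite leqNgt ik.
  by apply: (hnth k.-1 i) => //; rewrite inE st.
rewrite addr0 -(big_ord_widen m (fun i => Num.max (t`_i - th) 0) km).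
have -> : k%:R * th = \sum_(i < k) th by rewrite sumr_const card_ord mulr_natl.
rewrite -big_split /=; apply: eq_bigr => i _.
rewrite max_l ?subr_ge0; first by rewrite addrC subrK.
have k1m : (k.-1 < m)%N by rewrite (leq_trans _ km) // prednK.
have im : (i < m)%N by exact: leq_trans (ltn_ord i) km.
have ik1 : (i <= k.-1)%N by rewrite -ltnS prednK.
by apply: (hnth i k.-1) => //; rewrite inE st.
Qed.


Lemma kyfan {m} (al be : 'I_m -> R) (P : 'I_m -> 'I_m -> R) (s t : seq R) (k : nat) :
  (forall j l, 0 <= P j l) -> (forall j, \sum_l P j l = 1) -> (forall l, \sum_j P j l = 1) ->
  (forall j, al j <= \sum_l P j l * be l) ->
  perm_eq s [seq al j | j <- enum 'I_m] ->
  sorted (fun a b : R => b <= a) t -> perm_eq t [seq be l | l <- enum 'I_m] ->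
  (1 <= k <= m)%N -> \sum_(i < k) s`_i <= \sum_(i < k) t`_i.
Proof.
move=> P0 Prow Pcol hab ps so pt /andP[k1 km].
have st : size t = m by rewrite (perm_size pt) size_map size_enum_ord.
rewrite (topk_pivot _ _ st so); last by rewrite k1 km.
set th := t`_k.-1.
have [p Es] : exists p : 'S_m, s = [tuple tnth [tuple al j | j < m] (p i) | i < m].
  by apply/tuple_permP.
have Hs : forall i : 'I_m, s`_i = al (p i).
  by move=> i; rewrite Es -tnth_nth !tnth_mktuple.
rewrite (big_ord_widen m (fun i => s`_i) km).
pose c l := \sum_(i : 'I_m | (i < k)%N) P (p i) l.
have c0 : forall l, 0 <= c l by move=> l; apply: sumr_ge0.
have c1 : forall l, c l <= 1.
  move=> l; rewrite -(Pcol l) (reindex_inj (@perm_inj _ p)) /=.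
  exact: sum_pred_le.
have cs : \sum_l c l = k%:R.
  rewrite /c exchange_big /=.
  rewrite (eq_bigr (fun _ => 1)); last by move=> i _; apply: Prow.
  by rewrite -(big_ord_widen m (fun _ => (1 : R)) km) sumr_const card_ord.
apply: (@le_trans _ _ (\sum_l c l * be l)).
  rewrite /c; under [X in _ <= X]eq_bigr do rewrite mulr_suml.
  rewrite exchange_big /=; apply: ler_sum => i _; rewrite Hs; exact: hab.
have -> : \sum_l c l * be l = k%:R * th + \sum_l c l * (be l - th).
  rewrite -cs mulr_suml -big_split /=; apply: eq_bigr => l _.
  by rewrite mulrBr addrC subrK.
rewrite lerD2l (perm_big _ pt) /= big_map big_enum /=.
apply: ler_sum => l _.
have [h|h] := leP 0 (be l - th).
  by rewrite ler_piMl.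
by apply: mulr_ge0_le0 => //; exact: ltW.
Qed.

End Real.
Arguments kyfan {R m}.
Arguments jensen {R n T}.
Arguments sep_mono {R n}.
Section Mx.
Variable R : realType.
Local Notation C := R[i].
Local Open Scope complex_scope.
Local Open Scope sesquilinear_scope.

Lemma conjCE (z : C) : Num.conj z = (z^*)%C.
Proof. by []. Qed.

Lemma trmxC_mul {m n p} (A : 'M[C]_(m, n)) (B : 'M[C]_(n, p)) :
  (A *m B) ^t* = B ^t* *m A ^t*.
Proof. by rewrite trmx_mul map_mxM. Qed.

Lemma conj_form {m} (v : 'rV[C]_m) (X B : 'M[C]_m) :
  v *m (X ^t* *m B *m X) *m v ^t* = (v *m X ^t*) *m B *m (v *m X ^t*) ^t*.
Proof. by rewrite trmxC_mul trmxCK !mulmxA. Qed.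

Lemma unitary_l {m} (U : 'M[C]_m) : U \is unitarymx -> U ^t* *m U = 1%:M.
Proof. by move/unitarymxP/mulmx1C. Qed.

Lemma char_poly_unitary {m} (U D : 'M[C]_m) : U \is unitarymx ->
  char_poly (U ^t* *m D *m U) = char_poly D.
Proof.
move=> Uu.
have h1 : U *m U ^t* = 1%:M by apply/unitarymxP.
have h2 := unitary_l _ Uu.
rewrite /char_poly /char_poly_mx.
set P := U ^t*.
have -> : 'X%:M - map_mx polyC (P *m D *m U) =
   map_mx polyC P *m ('X%:M - map_mx polyC D) *m map_mx polyC U.
  rewrite mulmxBr mulmxBl !map_mxM mul_mx_scalar -scalemxAl.
  have -> : map_mx polyC P *m map_mx polyC U = 1%:M by rewrite -map_mxM /P h2 map_mx1.
  by rewrite scalemx1.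
rewrite !det_mulmx mulrC mulrA -det_mulmx -map_mxM h1 map_mx1 det1 mul1r.
done.
Qed.


Definition nsq (z : C) : R := complex.Re (`|z| ^+ 2).

Lemma nsqE (z : C) : (nsq z)%:C = z * (z^*)%C.
Proof.
rewrite /nsq RRe_real ?sqr_normc //; apply: ger0_real; exact: mulcJ_ge0.
Qed.

Lemma nsq_ge0 (z : C) : 0 <= nsq z.
Proof. by rewrite -ler0c nsqE mulcJ_ge0. Qed.

Lemma qf {m} (w : 'rV[C]_m) (d : 'rV[R]_m) :
  (w *m diag_mx (map_mx (real_complex R) d) *m w ^t*) 0 0 =
  (\sum_l nsq (w 0 l) * d 0 l)%:C.
Proof.
rewrite mul_mx_diag !mxE rmorph_sum; apply: eq_bigr => l _.
rewrite !mxE rmorphM /= nsqE conjCE; ring.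
Qed.


Lemma unitary_rows {m} (W : 'M[C]_m) : W \is unitarymx ->
  forall j, \sum_l nsq (W j l) = 1.
Proof.
move=> /unitarymxP h j; apply: (@complexI R); rewrite rmorph_sum rmorph1 /=.
have := congr1 (fun M : 'M[C]_m => M j j) h; rewrite !mxE eqxx /= => H.
apply: etrans H; by apply: eq_bigr => l _; rewrite nsqE !mxE.
Qed.

Lemma unitary_cols {m} (W : 'M[C]_m) : W \is unitarymx ->
  forall l, \sum_j nsq (W j l) = 1.
Proof.
move=> /unitary_l h l; apply: (@complexI R); rewrite rmorph_sum rmorph1 /=.
have := congr1 (fun M : 'M[C]_m => M l l) h; rewrite !mxE eqxx /= => H.
apply: etrans H; by apply: eq_bigr => j _; rewrite nsqE !mxE conjCE mulrC.
Qed.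

Lemma diag_entry {m} (U : 'M[C]_m) (d : 'rV[R]_m) j : U \is unitarymx ->
  (row j U *m (U ^t* *m diag_mx (map_mx (real_complex R) d) *m U) *m (row j U) ^t*) 0 0
  = (d 0 j)%:C.
Proof.
move=> Uu; rewrite conj_form -row_mul (unitarymxP Uu) row1 qf.
congr (_%:C); rewrite (bigD1 j) //= big1 ?addr0.
  by rewrite mxE !eqxx /nsq normr1 expr1n mul1r.
move=> l lj; rewrite mxE (negbTE lj) andbF /nsq normr0 expr0n /= mul0r.
done.
Qed.

Lemma offdiag_entry {m} (U V : 'M[C]_m) (d : 'rV[R]_m) j :
  (row j U *m (V ^t* *m diag_mx (map_mx (real_complex R) d) *m V) *m (row j U) ^t*) 0 0
  = (\sum_l nsq ((U *m V ^t*) j l) * d 0 l)%:C.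
Proof.
rewrite conj_form -row_mul qf; congr (_%:C); apply: eq_bigr => l _.
by rewrite mxE.
Qed.

Lemma diag_eigen {m} (U : 'M[C]_m) (d : 'rV[R]_m) j : U \is unitarymx ->
  eigenvalue (U ^t* *m diag_mx (map_mx (real_complex R) d) *m U) (d 0 j)%:C.
Proof.
move=> Uu; apply/eigenvalueP; exists (row j U).
  rewrite !mulmxA -row_mul (unitarymxP Uu) row1 -!mulmxA.
  rewrite mulmxA rowE scalemxAl; congr (_ *m _).
  apply/rowP => l; rewrite mul_mx_diag !mxE.
  by case: (l =P j) => [->|_]; rewrite /= ?mulr1 ?mulr0 ?mul1r ?mul0r.
apply/negP => /eqP h.
have := congr1 (fun M => M *m U ^t*) h.
rewrite /= -row_mul (unitarymxP Uu) row1 mul0mx => /rowP /(_ j).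
by rewrite !mxE !eqxx /= => /eqP; rewrite oner_eq0.
Qed.


Lemma eigs_perm {m} (U : 'M[C]_m) (d : 'rV[R]_m) (s : seq R) : U \is unitarymx ->
  eigs_desc (U ^t* *m diag_mx (map_mx (real_complex R) d) *m U) s ->
  perm_eq s [seq d 0 l | l <- enum 'I_m].
Proof.
move=> Uu [_ [_ hc]].
rewrite char_poly_unitary // char_poly_trig ?diag_mx_is_trig // in hc.
apply: (@perm_map_inj _ _ (real_complex R) (@complexI R)).
apply: prod_XsubC_eq; rewrite !big_map -hc.
by apply: eq_bigr => l _; rewrite !mxE eqxx mulr1n.
Qed.

End Mx.
Arguments eigs_perm {R m U d s}.
Arguments diag_entry {R m U d j}.
Arguments offdiag_entry {R m}.
Arguments diag_eigen {R m}.
Arguments unitary_rows {R m W}.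
Arguments unitary_cols {R m W}.
Arguments nsq_ge0 {R}.
Arguments nsq {R}.

Lemma box_of_spec (R : realType) (n m : nat) (I : 'I_n -> interval R)
  (zs : 'I_n -> 'M[R[i]]_m) (W0 : 'M[R[i]]_m) (d : 'I_n -> 'rV[R]_m) :
  W0 \is unitarymx ->
  (forall i, zs i = (W0 ^t* *m diag_mx (map_mx (@real_complex R) (d i)) *m W0)%sesqui) ->
  (forall i, spec_in (zs i) (I i)) -> forall l, in_box I (\row_i d i 0 l).
Proof.
move=> Wu hz sp l i; rewrite mxE.
have := sp i ((d i 0 l)%:C)%C; rewrite hz => /(_ (diag_eigen W0 (d i) l Wu)) [r /complexI -> //].
Qed.

Theorem mainTheorem8 (R : realType) (n m : nat) (I : 'I_n -> interval R)
  (f : 'rV[R]_n -> R) (xs ys : 'I_n -> 'M[R[i]]_m) :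
  convex_on_box I f -> sep_increasing I f ->
  abelian_tuple xs -> abelian_tuple ys ->
  (forall i, selfadjoint (xs i)) -> (forall i, selfadjoint (ys i)) ->
  (forall i, spec_in (xs i) (I i)) -> (forall i, spec_in (ys i) (I i)) ->
  (forall i, loewner_le (xs i) (ys i)) ->
  forall fx fy : 'M[R[i]]_m,
    joint_fcalc f xs fx -> joint_fcalc f ys fy -> weak_major fx fy.
Proof.
move=> cvx inc _ _ _ _ specx specy le fx fy [U [dx [Uu [Hx Efx]]]] [V [dy [Vu [Hy Efy]]]].
move=> s t es et k hk.
pose al := fun j : 'I_m => f (\row_i dx i 0 j).
pose be := fun l : 'I_m => f (\row_i dy i 0 l).
have Efx' : fx = (U ^t* *m diag_mx (map_mx (@real_complex R) (\row_j al j)) *m U)%sesqui.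
  by rewrite Efx; congr (_ *m _ *m _); congr diag_mx; apply/rowP => j; rewrite !mxE.
have Efy' : fy = (V ^t* *m diag_mx (map_mx (@real_complex R) (\row_j be j)) *m V)%sesqui.
  by rewrite Efy; congr (_ *m _ *m _); congr diag_mx; apply/rowP => j; rewrite !mxE.
have ps : perm_eq s [seq al j | j <- enum 'I_m].
  rewrite Efx' in es; have := eigs_perm Uu es.
  by congr (perm_eq _ _); apply: eq_map => l; rewrite mxE.
have pt : perm_eq t [seq be j | j <- enum 'I_m].
  rewrite Efy' in et; have := eigs_perm Vu et.
  by congr (perm_eq _ _); apply: eq_map => l; rewrite mxE.
have so : sorted (fun a b : R => b <= a) t by case: et => _ [].
pose W := (U *m V ^t*)%sesqui.
have Wu : W \is unitarymx by apply: mul_unitarymx => //; rewrite trmxC_unitary.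
pose P := fun j l : 'I_m => nsq (W j l).
have xb := box_of_spec _ _ _ I _ _ _ Uu Hx specx.
have yb := box_of_spec _ _ _ I _ _ _ Vu Hy specy.
apply: (kyfan al be P s t k) => //.
- by move=> j l; exact: nsq_ge0.
- exact: unitary_rows.
- exact: unitary_cols.
move=> j.
have [zb fz] := jensen I f cvx (index_enum 'I_m) (P j) (fun l => \row_i dy i 0 l)
  (fun l => nsq_ge0 _) yb (unitary_rows Wu j).
apply: le_trans fz; rewrite /al; apply: (sep_mono I f inc _ _ (xb j) zb) => i.
rewrite mxE.
have e : forall A B : 'M[R[i]]_(1,1), (A - B) 0 0 = A 0 0 - B 0 0 by move=> A B; rewrite !mxE.
have := le i (row j U); rewrite mulmxBr mulmxBl e Hx Hy diag_entry // offdiag_entry.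
rewrite -rmorphB ler0c subr_ge0.
move=> h; apply: (le_trans h); rewrite summxE; rewrite le_eqVlt; apply/orP; left; apply/eqP; apply: eq_bigr => l _.
by rewrite [RHS]mxE [(\row_i0 dy i0 0 l) 0 i]mxE.
Qed.
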